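(* Let $d$ be an integer and let $b,\alpha,\beta\in\mathbb{Z}_{\ge0}^n$ satisfy $\alpha_1\le\cdots\le\alpha_n=d$, $\beta_1\le\cdots\le\beta_n=d$, $\alpha_i\le\beta_i$ for all $i$, $\alpha_1=0$ and $\beta_1=b_1$. Let $I\subseteq S=K[x_1,\ldots,x_n]$ be the ideal generated by all monomials $x^u$ with $u\in\mathbb{Z}_{\ge0}^n$, $0\le u_i\le b_i$ and $\alpha_i\le u_1+\cdots+u_i\le\beta_i$ for $i=1,\ldots,n$ (the basic PLP-polymatroidal ideal of type $(\mathbf{0},b\mid\alpha,\beta)$). Then $\mathrm{soc}(I)$ is the basic PLP-polymatroidal ideal of type $$(\mathbf{0},(b_1-1,\ldots,b_n-1)\mid(\alpha_1,\ldots,\alpha_{n-1},\alpha_n-1),(\beta_1-1,\ldots,\beta_n-1)),$$ that is, $\mathrm{soc}(I)$ is the ideal generated by all monomials $x^v$ with $v\in\mathbb{Z}_{\ge0}^n$ satisfying $0\le v_i\le b_i-1$ for $i=1,\ldots,n$, $\alpha_i\le v_1+\cdots+v_i\le\beta_i-1$ for $i=1,\ldots,n-1$, and $v_1+\cdots+v_n=d-1$.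
   Context: $K$ is a field and $\mathfrak{m}=(x_1,\ldots,x_n)$. $I$ is a polymatroidal ideal generated in degree $d$ and has a linear resolution; $\mathrm{soc}(I)$ denotes the ideal generated by all monomials $w$ of degree $d-1$ with $x_iw\in I$ for all $i$, so that $(I:\mathfrak{m})=I+\mathrm{soc}(I)$. The PLP-polymatroidal ideal of type $(\mathbf{0},b'\mid\alpha',\beta')$ is the ideal generated by the monomials $x^v$ with $0\le v_i\le b'_i$ and $\alpha'_i\le v_1+\cdots+v_i\le\beta'_i$ for all $i$. *)

(* Defs.v *)
From mathcomp Require Import all_boot all_algebra.
From mathcomp Require Import mpoly.
Set Implicit Arguments. Unset Strict Implicit. Unset Printing Implicit Defensive.
Import GRing.Theory.
Local Open Scope ring_scope.

(* Monomials of S = K[x_1,...,x_n] are 'X_[m] for m : 'X_{1..n} (exponent vectors);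
   the variables x_1..x_n are 'X_i for i : 'I_n (0-based indexing). *)

Definition mono_ideal (K : fieldType) (n : nat) (G : 'X_{1..n} -> Prop)
  : {mpoly K[n]} -> Prop :=
  fun p => exists s : seq ({mpoly K[n]} * 'X_{1..n}),
    (forall c, c \in s -> G c.2) /\ p = \sum_(c <- s) c.1 * 'X_[c.2].

(* soc(I) for an ideal I generated in degree d: the ideal generated by all
   monomials w of degree d-1 with x_i w in I for all i.  "deg w = d - 1" is
   written (mdeg w).+1 = d, which is the integer condition (no truncation). *)
Definition soc (K : fieldType) (n : nat) (I : {mpoly K[n]} -> Prop) (d : nat)
  : {mpoly K[n]} -> Prop :=
  mono_ideal (fun w : 'X_{1..n} =>
    (mdeg w).+1 = d /\ forall i : 'I_n, I ('X_i * 'X_[w])).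

(* prefix sum u_1 + ... + u_i (i 0-based here, so includes index i) *)
Definition psum (n : nat) (u : 'X_{1..n}) (i : 'I_n) : nat :=
  (\sum_(j < n | (j <= i)%N) u j)%N.

Definition plp_gen (n : nat) (b alpha beta : 'I_n -> nat) (u : 'X_{1..n}) : Prop :=
  forall i : 'I_n, (u i <= b i)%N /\ (alpha i <= psum u i <= beta i)%N.

(* Main.v *)
Require Import Defs.
From mathcomp Require Import all_boot all_algebra.
From mathcomp Require Import mpoly.
Import GRing.Theory.
Local Open Scope ring_scope.

Lemma mono_dvd (K : fieldType) (n : nat) (G : 'X_{1..n} -> Prop) (m : 'X_{1..n}) :
  mono_ideal (K:=K) G 'X_[m] -> exists g, G g /\ (g <= m)%MM.
Proof.
move=> [s [Hs E]].
case: (boolP (has (fun c : {mpoly K[n]} * 'X_{1..n} => (c.2 <= m)%MM) s)).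
  by case/hasP=> c cs le; exists c.2; split=> //; apply: Hs.
move/hasPn=> H.
have: ('X_[m] : {mpoly K[n]})@_m = 0.
  rewrite E raddf_sum /= big_seq big1 // => c cs.
  apply/eqP; rewrite -[_ == 0]negbK -mcoeff_msupp.
  apply/negP; rewrite (perm_mem (msuppMX _ _)) => /mapP [m' _ Em].
  by move: (H c cs); rewrite Em lem_addr.
by rewrite mcoeffX eqxx => /eqP; rewrite oner_eq0.
Qed.

Lemma lem_mdeg_eq (n : nat) (g m : 'X_{1..n}) :
  (g <= m)%MM -> mdeg g = mdeg m -> g = m.
Proof.
move=> le e; rewrite -(submK le).
have: mdeg (m - g)%MM = 0%N.
  by move: (f_equal mdeg (submK le)); rewrite mdegD e => /eqP; rewrite -{2}[mdeg m]add0n eqn_add2r => /eqP.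
by move/eqP; rewrite mdeg_eq0 => /eqP ->; rewrite add0m.
Qed.

Lemma psum_last (n : nat) (u : 'X_{1..n}) (i : 'I_n) : i.+1 = n -> psum u i = mdeg u.
Proof.
move=> hi; rewrite /psum mdegE; apply: eq_bigl => j.
by have := ltn_ord j; rewrite -{2}hi ltnS => ->.
Qed.

Lemma psumD (n : nat) (u v : 'X_{1..n}) i : psum (u + v)%MM i = (psum u i + psum v i)%N.
Proof. by rewrite /psum -big_split; apply: eq_bigr => j _; rewrite mnmDE. Qed.

Lemma psum1 (n : nat) (k i : 'I_n) : psum U_(k)%MM i = (k <= i)%N.
Proof.
rewrite /psum; case: (leqP k i) => hk.
  rewrite (bigD1 k) //= mnm1E eqxx big1 // => j /andP [_ /negbTE]; rewrite mnm1E eq_sym => -> //.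
rewrite big1 // => j hj; rewrite mnm1E; case: eqP => // e; subst j.
by move: hj; rewrite leqNgt hk.
Qed.

Theorem proposition3p3 (K : fieldType) (n : nat) (d : nat)
  (b alpha beta : 'I_n -> nat)
  (hn : (0 < n)%N)
  (halpha_mono : forall i j : 'I_n, (i <= j)%N -> (alpha i <= alpha j)%N)
  (hbeta_mono : forall i j : 'I_n, (i <= j)%N -> (beta i <= beta j)%N)
  (halpha_last : forall i : 'I_n, (i.+1 = n)%N -> alpha i = d)
  (hbeta_last : forall i : 'I_n, (i.+1 = n)%N -> beta i = d)
  (halpha_beta : forall i : 'I_n, (alpha i <= beta i)%N)
  (halpha_first : forall i : 'I_n, (i : nat) = 0%N -> alpha i = 0%N)
  (hbeta_first : forall i : 'I_n, (i : nat) = 0%N -> beta i = b i) :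
  forall p : {mpoly K[n]},
    soc (mono_ideal (plp_gen b alpha beta)) d p <->
    mono_ideal (fun v : 'X_{1..n} =>
      (forall i : 'I_n, (v i < b i)%N) /\
      (forall i : 'I_n, (i.+1 < n)%N -> (alpha i <= psum v i < beta i)%N) /\
      (mdeg v).+1 = d) p.
Proof.
have hl : (n.-1 < n)%N by rewrite prednK.
pose l := Ordinal hl.
have hll : l.+1 = n by rewrite /= prednK.
have gdeg : forall g, plp_gen b alpha beta g -> mdeg g = d.
  move=> g /(_ l) [_]; rewrite (@psum_last _ g _ hll) halpha_last // hbeta_last //.
  by move=> h; apply/eqP; rewrite eqn_leq andbC.
have E : forall w : 'X_{1..n},
  ((mdeg w).+1 = d /\ forall i : 'I_n,
     mono_ideal (plp_gen b alpha beta) ('X_i * 'X_[w] : {mpoly K[n]})) <->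
  ((forall i : 'I_n, (w i < b i)%N) /\
   (forall i : 'I_n, (i.+1 < n)%N -> (alpha i <= psum w i < beta i)%N) /\
   (mdeg w).+1 = d).
  move=> w; split.
  - move=> [hd hi].
    have key : forall i : 'I_n, plp_gen b alpha beta (U_(i) + w)%MM.
      move=> i; have := hi i; rewrite -mpolyXD => /mono_dvd [g [pg le]].
      suff <- : g = (U_(i) + w)%MM by [].
      by apply: lem_mdeg_eq => //; rewrite gdeg // mdegD mdeg1 add1n.
    split; last split => //.
      move=> i; have [h _] := key i i; move: h.
      by rewrite mnmDE mnm1E eqxx add1n.
    move=> i hi1; apply/andP; split.
      have [_ /andP [+ _]] := key l i.
      rewrite psumD psum1; suff -> : (l <= i)%N = false by [].
      by apply/negbTE; rewrite -ltnNge /= -ltnS prednK.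
    have [_ /andP [_ +]] := key i i.
    by rewrite psumD psum1 leqnn add1n.
  - move=> [hb [hab hd]]; split => // i.
    exists [:: (1, (U_(i) + w)%MM)]; split.
      move=> c; rewrite mem_seq1 => /eqP -> /= j; split.
        rewrite mnmDE mnm1E; case: (i == j) => /=.
        by rewrite add1n hb.
        by rewrite add0n ltnW.
      case: (ltnP j.+1 n) => hj.
        have /andP [h1 h2] := hab j hj.
        rewrite psumD psum1; case: (i <= j)%N; rewrite /= ?add1n ?add0n.
          by rewrite h2 (leq_trans h1).
        by rewrite h1 ltnW.
      have hj' : j.+1 = n by apply/eqP; rewrite eqn_leq hj ltn_ord.
      by rewrite psum_last // halpha_last // hbeta_last // mdegD mdeg1 add1n hd leqnn.
    by rewrite big_seq1 /= mul1r mpolyXD.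
move=> p; rewrite /soc; split; move=> [s [Hs ->]]; exists s; split => // c cs;
  by apply/E; apply: Hs.
Qed.
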